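(* Let $\mathbf K\in\mathbb R^{n\times d}$ have rows $\mathbf k_1,\dots,\mathbf k_n$, let $R_{\mathbf K}=\|\mathbf K\|_{2,\infty}>0$, $\beta>0$, $\tau>0$. Let $\mathbf H_\tau=\big(\exp(\tfrac{\beta}{\tau^2}\langle\mathbf k_i,\mathbf k_l\rangle)\big)_{i,l\in[n]}$ and, for $s\in\{0,1,2,\dots\}$, $\mathbf T^s_{il}=\sum_{p=0}^s\frac{1}{p!}\big(\tfrac{\beta}{\tau^2}\langle\mathbf k_i,\mathbf k_l\rangle\big)^p$. For $\varepsilon>0$ define $$\tilde s(\varepsilon)\defeq\frac{\log(n/\varepsilon)+\beta R_{\mathbf K}^2/\tau^2}{W_0\!\left(\frac{\log(n/\varepsilon)\,\tau^2}{e\beta R_{\mathbf K}^2}+\frac1e\right)}.$$ Then $\|\mathbf H_\tau-\mathbf T^s\|_*\le\varepsilon$ for all integers $s\ge\lfloor\tilde s(\varepsilon)\rfloor$.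
   Context: $W_0$ is the principal branch of the Lambert W function ($w=W_0(z)$ is the unique solution $w>-1$ of $we^w=z$ for $z>-1/e$). $\|\mathbf K\|_{2,\infty}$ is the maximal Euclidean row norm, and $\|\cdot\|_*$ the nuclear norm. *)

(* Defs.v *)
From mathcomp Require Import all_boot all_order all_algebra.
From mathcomp Require Import polyrcf.
From mathcomp Require Import boolp classical_sets reals.
From mathcomp.analysis Require Import sequences exp.
Set Implicit Arguments. Unset Strict Implicit. Unset Printing Implicit Defensive.
Import Order.TTheory GRing.Theory Num.Theory.
Local Open Scope ring_scope.

(* Principal branch of the Lambert W function: for z > -1/e, W0 z is the
   unique w > -1 with w * e^w = z.  (Outside that domain the value is an
   arbitrary default; it is never used there.) *)
Definition LambertW0 (R : realType) (z : R) : R :=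
  xget 0 [set w : R | -1 < w /\ w * expR w = z].

Definition row_dot (R : realType) n d (K : 'M[R]_(n, d)) (i l : 'I_n) : R :=
  \sum_(j < d) K i j * K l j.

Definition norm_2inf (R : realType) n d (K : 'M[R]_(n, d)) : R :=
  \big[Num.max/0]_(i < n) Num.sqrt (\sum_(j < d) K i j ^+ 2).

(* Nuclear norm ||A||_* = sum of the singular values of A, i.e. the sum of the
   square roots of the eigenvalues (with algebraic multiplicity) of A^T A,
   which are the real roots of its characteristic polynomial. *)
Definition nuclear_norm (R : realType) m (A : 'M[R]_m) : R :=
  let p := char_poly (A^T *m A) in
  \sum_(x <- rootsR p) (mup x p)%:R * Num.sqrt x.

Definition Hmx (R : realType) n d (K : 'M[R]_(n, d)) (beta tau : R) : 'M[R]_n :=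
  \matrix_(i, l) expR (beta / tau ^+ 2 * row_dot K i l).

Definition Tmx (R : realType) n d (K : 'M[R]_(n, d)) (beta tau : R) (s : nat)
  : 'M[R]_n :=
  \matrix_(i, l) \sum_(p < s.+1) (beta / tau ^+ 2 * row_dot K i l) ^+ p / (p`!)%:R.

Definition s_tilde (R : realType) n d (K : 'M[R]_(n, d)) (beta tau eps : R) : R :=
  let RK := norm_2inf K in
  (ln (n%:R / eps) + beta * RK ^+ 2 / tau ^+ 2) /
  LambertW0 (ln (n%:R / eps) * tau ^+ 2 / (expR 1 * beta * RK ^+ 2) + (expR 1)^-1).

(* Main.v *)
Require Import Defs.
From mathcomp Require Import all_boot all_order all_algebra.
From mathcomp Require Import polyrcf complex spectral.
From mathcomp Require Import boolp classical_sets reals topology normedtype sequences exp.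
From mathcomp Require Import ring lra.
Unset Printing Implicit Defensive.
Import Order.TTheory GRing.Theory Num.Theory numFieldNormedType.Exports.
Local Open Scope classical_set_scope.
Local Open Scope ring_scope.


Lemma char_poly_simil (F : fieldType) n (P M : 'M[F]_n) : P \in unitmx ->
  char_poly (invmx P *m M *m P) = char_poly M.
Proof.
move=> uP.
rewrite /char_poly.
have -> : char_poly_mx (invmx P *m M *m P) =
   map_mx polyC (invmx P) *m char_poly_mx M *m map_mx polyC P.
  rewrite /char_poly_mx mulmxBr mulmxBl !map_mxM.
  rewrite -(mulmxA _ (_%:M)) mul_scalar_mx -scalemxAr -[X in 'X *: X]map_mxM mulVmx // map_mx1.
  by rewrite scalemx1.
rewrite !det_mulmx !det_map_mx mulrC mulrA -rmorphM -det_mulmx mulmxV //.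
by rewrite det1 rmorph1 mul1r.
Qed.

Lemma real_sym_split {R : rcfType} {n} (A : 'M[R]_n) : A^T = A ->
  exists d : 'I_n -> R, char_poly A = \prod_i ('X - (d i)%:P) /\
     char_poly (A *m A) = \prod_i ('X - (d i ^+ 2)%:P).
Proof.
move=> Asym.
pose f := @real_complex R.
pose Ac := map_mx f A.
have Ac_sym : Ac \is symmetricmx.
  apply/is_hermitianmxP; rewrite expr0 scale1r.
  apply/matrixP => i j; rewrite !mxE.
  by rewrite -[in LHS]Asym mxE.
have Ac_real : Ac \is a mxOver Num.real.
  apply/mxOverP => i j; rewrite mxE; apply/complex_realP; by eexists.
have Anormal := hermitian_normalmx (realsym_hermsym Ac_sym Ac_real).
have Dreal := hermitian_spectral_diag_real (realsym_hermsym Ac_sym Ac_real).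
move: (orthomx_spectralP Anormal) => /= Aeq.
set P := spectralmx Ac in Aeq; set D := spectral_diag Ac in Aeq Dreal.
have uP : P \in unitmx by apply: spectral_unit.
pose d i := complex.Re (D 0 i).
have Dd i : D 0 i = f (d i).
  by rewrite /d /f RRe_real //; move/mxOverP: Dreal; apply.
exists d; split.
  apply: (map_poly_inj f).
  rewrite map_char_poly -/Ac Aeq char_poly_simil // char_poly_trig ?diag_mx_is_trig //.
  rewrite map_prod_XsubC; apply: eq_bigr => i _.
  by rewrite mxE eqxx mulr1n Dd.
apply: (map_poly_inj f).
rewrite map_char_poly map_mxM -/Ac Aeq.
rewrite -!mulmxA (mulmxA P) mulmxV // mul1mx (mulmxA (diag_mx D)) mulmx_diag mulmxA.
rewrite char_poly_simil // char_poly_trig ?diag_mx_is_trig //.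
rewrite map_prod_XsubC; apply: eq_bigr => i _.
by rewrite !mxE eqxx mulr1n Dd rmorphXn expr2.
Qed.

Lemma mup_prod_seq (F : fieldType) (s : seq F) x :
  mup x (\prod_(y <- s) ('X - y%:P)) = count_mem x s.
Proof.
elim: s => [|y s IH]; first by rewrite big_nil mupNroot // root1.
rewrite big_cons mupM ?polyXsubC_eq0 ?monic_neq0 ?monic_prod_XsubC //.
by rewrite IH -[('X - y%:P)]expr1 mup_XsubCX /= eq_sym; case: (x == y).
Qed.

Lemma sum_rootsR_prod (R : rcfType) n (c : 'I_n -> R) (G : R -> R) :
  \sum_(x <- rootsR (\prod_i ('X - (c i)%:P)))
     (mup x (\prod_i ('X - (c i)%:P)))%:R * G x = \sum_i G (c i).
Proof.
set s := [seq c i | i <- enum 'I_n].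
have ps : \prod_i ('X - (c i)%:P) = \prod_(y <- s) ('X - y%:P).
  by rewrite big_map big_enum.
rewrite ps.
have p0 : \prod_(y <- s) ('X - y%:P) != 0 by rewrite monic_neq0 ?monic_prod_XsubC.
have perm : perm_eq (rootsR (\prod_(y <- s) ('X - y%:P))) (undup s).
  apply: uniq_perm; first exact: uniq_roots.
    exact: undup_uniq.
  move=> x; rewrite mem_undup -(roots_on_rootsR p0) in_itv /= root_prod_XsubC.
  done.
rewrite (perm_big _ perm) /=.
under eq_bigr => x _ do rewrite mup_prod_seq.
transitivity (\sum_(y <- s) G y); last by rewrite big_map big_enum.
rewrite -[RHS]big_undup_iterop_count; apply: eq_bigr => x _.
rewrite Monoid.iteropE; elim: (count_mem x s) => [|k IH]; first by rewrite mul0r.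
by rewrite /= -IH mulrSr mulrDl mul1r addrC.
Qed.

Lemma nuclear_psd (R : realType) n (A : 'M[R]_n) : A^T = A ->
  (forall u : 'rV_n, 0 <= (u *m A *m u^T) 0 0) -> nuclear_norm A = \tr A.
Proof.
move=> Asym Apsd.
have [d [cA cAA]] := real_sym_split _ Asym.
rewrite /nuclear_norm /= Asym cAA sum_rootsR_prod.
have dge0 i : 0 <= d i.
  have : eigenvalue A (d i).
    rewrite eigenvalue_root_char cA /root horner_prod (bigD1 i) //= !hornerE subrr mul0r eqxx //.
  move/eigenvalueP => [v vA v0].
  have := Apsd v; rewrite vA -scalemxAl mxE.
  have vpos : 0 < (v *m v^T) 0 0.
    rewrite mxE; rewrite lt0r; apply/andP; split; last first.
      by apply: sumr_ge0 => j _; rewrite mxE -expr2 sqr_ge0.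
    apply: contra v0 => /eqP s0; apply/eqP/rowP => j.
    have : (v 0 j) ^+ 2 = 0.
      apply/eqP; rewrite eq_le sqr_ge0 andbT -s0.
      rewrite (bigD1 j) //= mxE -expr2 lerDl.
      by apply: sumr_ge0 => k _; rewrite mxE -expr2 sqr_ge0.
    by move/eqP; rewrite expf_eq0 /= mxE => /eqP.
  by rewrite pmulr_lge0.
under eq_bigr => i _ do rewrite sqrtr_sqr ger0_norm //.
case: n A Asym Apsd d cA cAA dge0 => [|n] A Asym Apsd d cA cAA dge0.
  by rewrite big_ord0 /mxtrace big_ord0.
apply: oppr_inj; rewrite -char_poly_trace // cA.
have -> : \prod_i ('X - (d i)%:P) = \prod_(y <- [seq d i | i <- enum 'I_n.+1]) ('X - y%:P).
  by rewrite big_map big_enum.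
have sz : size [seq d i | i <- enum 'I_n.+1] = n.+1 by rewrite size_map size_enum_ord.
have := @coefPn_prod_XsubC _ [seq d i | i <- enum 'I_n.+1]; rewrite sz => -> //.
by rewrite big_map big_enum.
Qed.


Definition Ts {R : realType} (s : nat) (y : R) := \sum_(p < s.+1) y ^+ p / (p`!)%:R.

Lemma series_sub_Ts {R : realType} (y : R) s N : (s.+1 <= N)%N ->
  series (exp_coeff y) N - Ts s y = \sum_(s.+1 <= k < N) y ^+ k / (k`!)%:R.
Proof.
move=> sN; rewrite /series /= (@big_cat_nat _ _ _ s.+1 0 N _ _ (leq0n _) sN) /= /Ts big_mkord.
by rewrite addrAC subrr add0r.
Qed.

Lemma tail_cvg {R : realType} (y : R) s :
  (fun N => series (exp_coeff y) N - Ts s y) @ \oo --> expR y - Ts s y.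
Proof.
apply: cvgB; first exact: is_cvg_series_exp_coeff.
exact: cvg_cst.
Qed.

Lemma series_le_expR (R : realType) (y : R) N : 0 <= y -> series (exp_coeff y) N <= expR y.
Proof.
move=> y0; apply: nondecreasing_cvgn_le; last exact: is_cvg_series_exp_coeff.
apply: nondecreasing_series => k _ _.
by rewrite /exp_coeff /= divr_ge0 // exprn_ge0.
Qed.

Lemma fact_split j t : (t`! * j`! <= (j + t)`!)%N.
Proof.
have := bin_fact (leq_addl j t); rewrite addnK => <-.
by apply: leq_pmull; rewrite bin_gt0 leq_addl.
Qed.

Lemma tail_le (R : realType) (y : R) s : 0 <= y ->
  expR y - Ts s y <= y ^+ s.+1 / (s.+1`!)%:R * expR y.
Proof.
move=> y0.
rewrite -(cvg_lim _ (tail_cvg y s)) //.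
apply: limr_le; first exact: cvgP (tail_cvg y s).
near=> N.
have sN : (s.+1 <= N)%N by near: N; apply: nbhs_infty_ge.
rewrite series_sub_Ts //.
set mid := y ^+ s.+1 / (s.+1`!)%:R * series (exp_coeff y) (N - s.+1)%N.
have H2 : mid <= y ^+ s.+1 / (s.+1`!)%:R * expR y.
  by rewrite ler_wpM2l ?series_le_expR // divr_ge0 // exprn_ge0.
apply: le_trans H2.
have -> : \sum_(s.+1 <= k < N) y ^+ k / (k`!)%:R =
  \sum_((0 + s.+1)%N <= k < N) y ^+ k / (k`!)%:R by [].
rewrite big_addn /mid /series /= mulr_sumr.
apply: ler_sum => j _.
rewrite exprD /exp_coeff /=.
have -> : y ^+ s.+1 / (s.+1`!)%:R * (y ^+ j / (j`!)%:R) =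
   y ^+ j * y ^+ s.+1 * ((s.+1`!)%:R^-1 * (j`!)%:R^-1) by ring.
rewrite ler_wpM2l ?mulr_ge0 ?exprn_ge0 // -invfM.
rewrite lef_pV2 ?posrE ?ltr0n ?fact_gt0 ?muln_gt0 ?fact_gt0 //.
  by rewrite -natrM ler_nat fact_split.
by rewrite mulr_gt0 // ltr0n fact_gt0.
Unshelve. all: by end_near.
Qed.

Lemma gram_pow_psd (R : realType) n d (K : 'M[R]_(n, d)) (u : 'rV[R]_n) p :
  0 <= \sum_i \sum_l u 0 i * u 0 l * row_dot K i l ^+ p.
Proof.
pose P (i : 'I_n) (f : {ffun 'I_p -> 'I_d}) := \prod_t K i (f t).
have rdp i l : row_dot K i l ^+ p = \sum_f P i f * P l f.
  have -> : row_dot K i l ^+ p = \prod_(t < p) row_dot K i l by rewrite prodr_const card_ord.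
  rewrite /row_dot bigA_distr_bigA /=.
  by apply: eq_bigr => f _; rewrite -big_split.
under eq_bigr => i _ do under eq_bigr => l _ do rewrite rdp mulr_sumr.
under eq_bigr => i _ do rewrite exchange_big.
rewrite exchange_big /=.
apply: sumr_ge0 => f _.
have -> : \sum_i \sum_l u 0 i * u 0 l * (P i f * P l f) = (\sum_i u 0 i * P i f) ^+ 2.
  rewrite expr2 mulr_suml; apply: eq_bigr => i _; rewrite mulr_sumr.
  by apply: eq_bigr => l _; ring.
exact: sqr_ge0.
Qed.

Lemma cvg_sum_fin (R : realType) (I : finType) (G : I -> nat -> R) (L : I -> R) :
  (forall i, G i N @[N --> \oo] --> L i) ->
  \sum_i G i N @[N --> \oo] --> \sum_i L i.
Proof.
move=> HG.
by apply: (@cvg_big R^o I +%R 0 predT add_continuous) => // i _; apply: HG.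
Qed.

Lemma Mentry (R : realType) n d (K : 'M[R]_(n, d)) beta tau s i l :
  (Hmx K beta tau - Tmx K beta tau s) i l =
  expR (beta / tau ^+ 2 * row_dot K i l) - Ts s (beta / tau ^+ 2 * row_dot K i l).
Proof. by rewrite !mxE. Qed.

Lemma M_psd (R : realType) n d (K : 'M[R]_(n, d)) beta tau s (u : 'rV[R]_n) :
  0 <= beta / tau ^+ 2 ->
  0 <= (u *m (Hmx K beta tau - Tmx K beta tau s) *m u^T) 0 0.
Proof.
move=> c0; set c := beta / tau ^+ 2 in c0 *.
set M := Hmx K beta tau - Tmx K beta tau s.
have -> : (u *m M *m u^T) 0 0 = \sum_i \sum_l u 0 i * u 0 l * M i l.
  rewrite mxE; under eq_bigr => l _ do rewrite !mxE mulr_suml.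
  rewrite exchange_big; apply: eq_bigr => i _; apply: eq_bigr => l _.
  by rewrite mulrAC.
pose g N := \sum_i \sum_l u 0 i * u 0 l *
    (series (exp_coeff (c * row_dot K i l)) N - Ts s (c * row_dot K i l)).
have gcvg : g N @[N --> \oo] --> \sum_i \sum_l u 0 i * u 0 l * M i l.
  apply: cvg_sum_fin => i; apply: cvg_sum_fin => l.
  rewrite /M Mentry -/c.
  apply: cvgM; first exact: cvg_cst.
  exact: tail_cvg.
rewrite -(cvg_lim _ gcvg) //.
apply: limr_ge; first exact: cvgP gcvg.
near=> N.
have sN : (s.+1 <= N)%N by near: N; apply: nbhs_infty_ge.
rewrite /g.
under eq_bigr => i _ do under eq_bigr => l _ do
  rewrite series_sub_Ts // mulr_sumr.
under eq_bigr => i _ do rewrite exchange_big.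
rewrite exchange_big /=.
apply: sumr_ge0 => k _.
have -> : \sum_i \sum_l u 0 i * u 0 l * ((c * row_dot K i l) ^+ k / (k`!)%:R) =
   (c ^+ k / (k`!)%:R) * \sum_i \sum_l u 0 i * u 0 l * row_dot K i l ^+ k.
  rewrite mulr_sumr; apply: eq_bigr => i _; rewrite mulr_sumr; apply: eq_bigr => l _.
  by rewrite exprMn; ring.
by rewrite mulr_ge0 ?gram_pow_psd // divr_ge0 // exprn_ge0.
Unshelve. all: by end_near.
Qed.

Lemma final_ineq (R : realType) (nn eps x w : R) (t : nat) :
  0 < nn -> 0 < eps -> 0 < x -> 0 < w ->
  w * expR w = (ln (nn / eps) + x) / (expR 1 * x) ->
  (ln (nn / eps) + x) / w < t%:R ->
  nn * (x ^+ t / (t`!)%:R * expR x) <= eps.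
Proof.
move=> nn0 eps0 x0 w0 hw ht.
set L := ln (nn / eps) in hw ht.
have ex0 : 0 < expR 1 * x by rewrite mulr_gt0 // expR_gt0.
have Lx0 : 0 < L + x.
  have -> : L + x = (L + x) / (expR 1 * x) * (expR 1 * x).
    by rewrite divfK // gt_eqF.
  by rewrite mulr_gt0 // -hw mulr_gt0 // expR_gt0.
have t0 : (0 < t)%N.
  case: t ht => [ht|//].
  have h : 0 < (L + x) / w by rewrite divr_gt0.
  by have := lt_trans h ht; rewrite ltr0n.
have tpos : 0 < (t%:R : R) by rewrite ltr0n.
have ft : (t%:R : R) ^+ t / (t`!)%:R <= expR 1 ^+ t.
  rewrite -expRM_natl mulr1.
  case: t t0 {ht tpos} => // t' _.
  have := @expR_ge1Dxn R (t'.+1%:R) t' (ler0n _ _).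
  by move=> h; apply: le_trans h; rewrite lerDr.
have step1 : x ^+ t / (t`!)%:R <= (expR 1 * x / t%:R) ^+ t.
  have -> : x ^+ t / (t`!)%:R = (x / t%:R) ^+ t * ((t%:R : R) ^+ t / (t`!)%:R).
    rewrite expr_div_n; field.
    by rewrite expf_neq0 // ?gt_eqF // ltr0n fact_gt0.
  rewrite [X in _ <= X](_ : _ = (x / t%:R) ^+ t * expR 1 ^+ t); last first.
    by rewrite -exprMn; congr (_ ^+ _); field; rewrite gt_eqF.
  by rewrite ler_wpM2l // exprn_ge0 // divr_ge0 // ltW.
have step2 : expR 1 * x / t%:R <= expR (- w).
  have ex : expR 1 * x = (L + x) / (w * expR w).
    rewrite hw; field.
    by rewrite !gt_eqF ?expR_gt0.
  rewrite ex expRN.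
  have -> : (L + x) / (w * expR w) / t%:R = ((L + x) / w / t%:R) * (expR w)^-1.
    by field; rewrite !gt_eqF ?expR_gt0.
  rewrite -[X in _ <= X]mul1r ler_wpM2r ?invr_ge0 ?expR_ge0 //.
  by rewrite ler_pdivrMr // mul1r ltW.
have step3 : (expR 1 * x / t%:R) ^+ t <= expR (- (L + x)).
  apply: le_trans (_ : expR (- w) ^+ t <= _).
    by rewrite lerXn2r // ?nnegrE ?expR_ge0 // divr_ge0 // mulr_ge0 ?expR_ge0 // ltW.
  rewrite -expRM_natl ler_expR mulrN lerN2.
  by move: ht; rewrite ltr_pdivrMr // => /ltW.
have eL : expR (- (L + x)) = eps / nn * expR (- x).
  by rewrite opprD expRD !expRN /L lnK ?posrE ?divr_gt0 // invf_div.
apply: (@le_trans _ _ (nn * (eps / nn * expR (- x) * expR x))).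
  apply: ler_wpM2l; first exact: ltW.
  apply: ler_wpM2r; first exact: expR_ge0.
  by rewrite -eL; exact: le_trans step1 step3.
rewrite -mulrA -expRD addNr expR0 mulr1 mulrC divfK //.
by rewrite gt_eqF.
Qed.

Lemma lambert_ex (R : realType) (z : R) : 0 < z ->
  0 < LambertW0 z /\ LambertW0 z * expR (LambertW0 z) = z.
Proof.
move=> z0.
have ex : exists w : R, -1 < w /\ w * expR w = z.
  have [c c01 fc] : exists2 c, c \in `[0, z] & (fun w : R => w * expR w) c = z.
    apply: IVT; first exact: ltW.
      apply: continuous_subspaceT => w.
      apply: continuousM; first exact: cvg_id.
      exact: continuous_expR.
    rewrite /= mul0r.
    have zle : z <= z * expR z.
      by rewrite ler_peMr ?ltW // ?expR_gt1 // ltW // expR_gt1.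
    by rewrite ge_min le_max zle orbT andbT ltW.
  exists c; split => //.
  by move: c01; rewrite in_itv /= => /andP[c0 _]; apply: lt_le_trans c0; rewrite ltrN10.
have [w1 hw] := xgetPex 0 ex.
rewrite /LambertW0; split => //.
have : 0 < xget 0 [set w : R | -1 < w /\ w * expR w = z] *
            expR (xget 0 [set w : R | -1 < w /\ w * expR w = z]) by rewrite hw.
by rewrite pmulr_lgt0 // expR_gt0.
Qed.

Theorem lemma3 (R : realType) (n d : nat) (K : 'M[R]_(n, d)) (beta tau : R) :
  0 < norm_2inf K -> 0 < beta -> 0 < tau ->
  forall eps : R, 0 < eps ->
  forall s : nat, (Num.floor (s_tilde K beta tau eps) <= s%:Z)%R ->
    nuclear_norm (Hmx K beta tau - Tmx K beta tau s) <= eps.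
Proof.
move=> RK0 b0 t0 eps e0 s hs.
set M := Hmx K beta tau - Tmx K beta tau s.
set c := beta / tau ^+ 2.
have c0 : 0 < c by rewrite divr_gt0 // exprn_gt0.
have Msym : M^T = M.
  apply/matrixP => i l; rewrite !mxE /row_dot.
  by under eq_bigr => j _ do rewrite mulrC.
have Mpsd : forall u : 'rV_n, 0 <= (u *m M *m u^T) 0 0.
  by move=> u; apply: M_psd; exact: ltW.
rewrite (nuclear_psd _ _ _ Msym Mpsd).
set RK := norm_2inf K in RK0 *.
set x := c * RK ^+ 2.
have x0 : 0 < x by rewrite mulr_gt0 // exprn_gt0.
have n0 : (0 < n)%N.
  rewrite lt0n; apply/negP => /eqP n_0; move: RK0.
  rewrite /RK /norm_2inf big_pred0 ?ltxx // => -[i ilt] /=.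
  by move: ilt; rewrite n_0.
have yb i : 0 <= c * row_dot K i i <= x.
  have rd0 : 0 <= row_dot K i i.
    by apply: sumr_ge0 => j _; rewrite -expr2 sqr_ge0.
  apply/andP; split; first by apply: mulr_ge0 => //; exact: ltW.
  rewrite /x; apply: ler_wpM2l; first exact: ltW.
  have hle : Num.sqrt (row_dot K i i) <= RK.
    rewrite /RK /norm_2inf /row_dot.
    under eq_bigr => j _ do rewrite -expr2.
    exact: (le_bigmax _ (fun i => Num.sqrt (\sum_(j < d) K i j ^+ 2)) i).
  rewrite -(sqr_sqrtr rd0) lerXn2r // ?nnegrE ?sqrtr_ge0 //.
  exact: le_trans (sqrtr_ge0 _) hle.
have trM : \tr M = \sum_i (expR (c * row_dot K i i) - Ts s (c * row_dot K i i)).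
  by apply: eq_bigr => i _; rewrite Mentry.
rewrite trM.
set L := ln (n%:R / eps).
have nR0 : 0 < (n%:R : R) by rewrite ltr0n.
have [Lx|Lx] := leP (L + x) 0.
  apply: (@le_trans _ _ (\sum_(i < n) expR x)).
    apply: ler_sum => i _.
    have /andP[y0 yx] := yb i.
    apply: (@le_trans _ _ (expR (c * row_dot K i i))); last by rewrite ler_expR.
    rewrite lerBlDr lerDl.
    by apply: sumr_ge0 => p _; rewrite divr_ge0 // exprn_ge0.
  rewrite sumr_const card_ord -mulr_natl.
  have : expR x <= eps / n%:R.
    have -> : eps / n%:R = expR (- L).
      by rewrite expRN /L lnK ?posrE ?divr_gt0 // invf_div.
    rewrite ler_expR; lra.
  move=> h; rewrite -(@ler_pM2l _ (n%:R)^-1) ?invr_gt0 // mulKf ?gt_eqF //.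
  by rewrite mulrC.
set z := (L + x) / (expR 1 * x).
have z0 : 0 < z by rewrite divr_gt0 // mulr_gt0 // expR_gt0.
have [w0 hw] := lambert_ex _ _ z0.
have st : s_tilde K beta tau eps = (L + x) / LambertW0 z.
  rewrite /s_tilde -/RK -/L /z /x /c; congr (_ / _); first by congr (_ + _); field; rewrite gt_eqF.
  congr (LambertW0 _); field.
  by rewrite !gt_eqF ?expR_gt0 ?exprn_gt0.
have hlt : (L + x) / LambertW0 z < s.+1%:R.
  rewrite -st.
  have /andP[_ h] := floor_itv (s_tilde K beta tau eps).
  apply: lt_le_trans h _.
  rewrite (_ : s.+1%:R = (s%:Z + 1)%:~R :> R); last first.
    by rewrite -PoszD addn1.
  by rewrite ler_int lerD2r.
apply: (@le_trans _ _ (\sum_(i < n) (x ^+ s.+1 / (s.+1`!)%:R * expR x))).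
  apply: ler_sum => i _.
  have /andP[y0 yx] := yb i.
  apply: le_trans (tail_le _ _ s y0) _.
  apply: ler_pM; rewrite ?mulr_ge0 ?exprn_ge0 ?invr_ge0 ?expR_ge0 //.
    by apply: ler_wpM2r; rewrite ?invr_ge0 // lerXn2r // ?nnegrE // ltW.
  by rewrite ler_expR.
rewrite sumr_const card_ord -(mulr_natl (x ^+ s.+1 / (s.+1`!)%:R * expR x) n).
apply: (final_ineq _ _ _ _ _ _ nR0 e0 x0 w0 _ hlt).
by rewrite hw.
Qed.
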